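(* Let $\mathcal{H}$ be a hypertree, $T$ a host tree of $\mathcal{H}$, and $uv$ an edge of $T$. Then $I_\mathcal{H}(uv)$ is a basic set of $\mathcal{H}$. Moreover, every basic set of $\mathcal{H}$ is of the form $I_\mathcal{H}(uv)$ for some edge $uv$ of $T$.
   Context: A hypergraph $\mathcal{H}$ has a finite vertex set $V(\mathcal{H})$ and a finite family of nonempty subsets (edges). A host tree of $\mathcal{H}$ is a tree with vertex set $V(\mathcal{H})$ in which every edge of $\mathcal{H}$ induces a connected subgraph; $\mathcal{H}$ is a hypertree if it has a host tree. For $V'\subseteq V(\mathcal{H})$, $I_\mathcal{H}(V')$ is the intersection of all edges of $\mathcal{H}$ containing $V'$, or $V(\mathcal{H})$ if none does; $I_\mathcal{H}(uv)=I_\mathcal{H}(\{u,v\})$. A union of sets is connected if the intersection graph of the sets is connected. The completion $Comp(\mathcal{H})$ is the hypergraph without repeated edges on $V(\mathcal{H})$ whose edges are $V(\mathcal{H})$, all one-element subsets, and all proper subsets of $V(\mathcal{H})$ obtainable from edges of $\mathcal{H}$ by repeated nonempty intersections and connected unions. A basic set of $\mathcal{H}$ is an edge of $Comp(\mathcal{H})$ with more than one vertex that cannot be expressed as a connected union of strictly smaller edges of $Comp(\mathcal{H})$. *)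

(* Defs.v *)
From mathcomp Require Import all_boot.
Set Implicit Arguments. Unset Strict Implicit. Unset Printing Implicit Defensive.

(* A hypergraph on the vertex set T (a finType, V(H) = T) is given by a finite
   family (sequence, repetitions allowed) E of nonempty subsets of T. *)
Definition hypergraph (T : finType) (E : seq {set T}) : Prop :=
  forall e, e \in E -> e != set0.

Definition gadj (T : finType) (F : {set {set T}}) : rel T :=
  fun x y => (x != y) && ([set x; y] \in F).

Definition induces_connected (T : finType) (F : {set {set T}}) (S : {set T}) : Prop :=
  forall x y, x \in S -> y \in S ->
    connect (fun a b => [&& a \in S, b \in S & gadj F a b]) x y.

Definition is_tree (T : finType) (F : {set {set T}}) : Prop :=
  [/\ 0 < #|T|, (forall e, e \in F -> #|e| = 2),
      induces_connected F setT & #|F| = #|T| - 1].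

Definition host_tree (T : finType) (E : seq {set T}) (F : {set {set T}}) : Prop :=
  is_tree F /\ forall e, e \in E -> induces_connected F e.

Definition hypertree (T : finType) (E : seq {set T}) : Prop :=
  hypergraph E /\ exists F, host_tree E F.

(* I_H(V') : intersection of all edges containing V' (setT if there is none). *)
Definition IH (T : finType) (E : seq {set T}) (V' : {set T}) : {set T} :=
  \bigcap_(e <- E | V' \subset e) e.

(* The union of the family P is connected: the intersection graph of P is connected. *)
Definition family_connected (T : finType) (P : {set {set T}}) : Prop :=
  forall B C, B \in P -> C \in P ->
    connect (fun X Y => [&& X \in P, Y \in P & X :&: Y != set0]) B C.

Inductive obtainable (T : finType) (E : seq {set T}) : {set T} -> Prop :=
| obt_edge e : e \in E -> obtainable E e
| obt_cap A B : obtainable E A -> obtainable E B -> A :&: B != set0 ->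
    obtainable E (A :&: B)
| obt_cup (P : {set {set T}}) : P != set0 ->
    (forall A, A \in P -> obtainable E A) -> family_connected P ->
    obtainable E (\bigcup_(A in P) A).

Definition comp_edge (T : finType) (E : seq {set T}) (A : {set T}) : Prop :=
  A = setT \/ (exists x, A = [set x]) \/ (A \proper setT /\ obtainable E A).

Definition basic_set (T : finType) (E : seq {set T}) (A : {set T}) : Prop :=
  [/\ comp_edge E A, 1 < #|A| &
      ~ exists P : {set {set T}},
          [/\ P != set0, (forall B, B \in P -> comp_edge E B /\ B \proper A),
              family_connected P & \bigcup_(B in P) B = A]].

(* Main.v *)
Require Import Defs.
From mathcomp Require Import all_boot zify.
Set Implicit Arguments. Unset Strict Implicit. Unset Printing Implicit Defensive.

Lemma gadj_sym (T : finType) (G : {set {set T}}) : symmetric (gadj G).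
Proof. by move=> x y; rewrite /gadj eq_sym setUC. Qed.

Lemma conn_card (T : finType) (G : {set {set T}}) (r : T) :
  (forall y, connect (gadj G) r y) -> #|T|.-1 <= #|G|.
Proof.
move=> Hc.
pose R := fix R n := if n is n'.+1 then R n' :|: [set y | [exists z in R n', gadj G z y]] else [set r].
have HR : forall y, exists n, y \in R n.
  have gen : forall p x n, path (gadj G) x p -> x \in R n -> exists m, last x p \in R m.
    elim=> [|z p IH] x n /=; first by move=> _ H; exists n.
    case/andP=> Hxz Hp Hx; apply: (IH z n.+1 Hp).
    rewrite /= in_setU; apply/orP; right; rewrite inE; apply/existsP; exists x.
    by rewrite Hx.
  move=> y; have /connectP [p pth ->] := Hc y.
  by apply: (gen p r 0 pth); rewrite /= in_set1.
pose D y := ex_minn (HR y).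
have HD : forall y, y != r -> exists z, gadj G y z && (D z < D y).
  move=> y Hy; rewrite /D; case: ex_minnP => m Hm Hmin.
  case: m Hm Hmin => [|m'] /= Hm Hmin; first by move: Hm; rewrite in_set1 (negbTE Hy).
  case/setUP: Hm => [Hm'|].
    by have := Hmin _ Hm'; rewrite ltnn.
  rewrite inE => /existsP [z /andP [Hz Hzy]].
  exists z; rewrite gadj_sym Hzy /=.
  case: ex_minnP => k _ Hk; exact: Hk.
pose f y := odflt y [pick z | gadj G y z && (D z < D y)].
have Hf : forall y, y != r -> gadj G y (f y) && (D (f y) < D y).
  move=> y Hy; rewrite /f; case: pickP => [z //|/= none].
  by have [z Hz] := HD y Hy; rewrite none in Hz.
have inj : {in [set~ r] &, injective (fun y => [set y; f y])}.
  move=> y y'; rewrite !in_setC1 => Hy Hy' /= E.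
  case: (eqVneq y y') => // Hne.
  have /andP [_ H1] := Hf y Hy; have /andP [_ H2] := Hf y' Hy'.
  have : y \in [set y'; f y'] by rewrite -E !inE eqxx.
  rewrite !inE (negbTE Hne) /= => /eqP Ey.
  have : y' \in [set y; f y] by rewrite E !inE eqxx.
  rewrite !inE eq_sym (negbTE Hne) /= => /eqP Ey'.
  by move: H1 H2; rewrite -Ey -Ey' => H1 H2; have := ltn_trans H1 H2; rewrite ltnn.
have sub : [set [set y; f y] | y in [set~ r]] \subset G.
  apply/subsetP => e /imsetP [y]; rewrite in_setC1 => Hy ->.
  by have /andP [/andP [_ H] _] := Hf y Hy.
by rewrite -(cardsC1 r) -(card_in_imset inj); apply: subset_leq_card.
Qed.

Lemma tree_conn (T : finType) (F : {set {set T}}) : is_tree F -> forall x y, connect (gadj F) x y.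
Proof.
case=> _ _ Hc _ x y; have := Hc x y (in_setT x) (in_setT y).
have E : (fun a b => [&& a \in setT, b \in setT & gadj F a b]) =2 gadj F.
  by move=> a b; rewrite !in_setT.
by rewrite (eq_connect E).
Qed.

Lemma gadj_neq (T : finType) (F : {set {set T}}) u v : gadj F u v -> u != v.
Proof. by case/andP. Qed.

Lemma cut_edge (T : finType) (F : {set {set T}}) u v : is_tree F -> gadj F u v ->
  ~~ connect (gadj (F :\ [set u; v])) u v.
Proof.
move=> Ht /andP [Hne Hin]; apply/negP => Huv.
set G := F :\ [set u; v].
have Hall : forall y, connect (gadj G) u y.
  have gen : forall p x, path (gadj F) x p -> connect (gadj G) u x -> connect (gadj G) u (last x p).
    elim=> [|z p IH] x //= /andP [Hxz Hp] Hx; apply: IH Hp _.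
    case: (eqVneq [set x; z] [set u; v]) => E.
      have : z \in [set u; v] by rewrite -E !inE eqxx orbT.
      by rewrite !inE => /orP [/eqP ->|/eqP ->].
    apply: connect_trans Hx (connect1 _).
    by move: Hxz; rewrite /gadj /G in_setD1 E => /andP [-> ->].
  move=> y; have /connectP [p pth ->] := tree_conn Ht u y.
  by apply: gen pth _; apply: connect0.
have := conn_card Hall.
case: Ht => _ _ _ Hcard.
have HT : 2 <= #|T|.
  have := subset_leq_card (subsetT [set u; v]).
  by rewrite cards2 Hne cardsT.
have := cardsD1 [set u; v] F; rewrite Hin -/G => HF.
move=> H; move: Hcard HF H HT; set a := #|F|; set b := #|F :\ _|; set n := #|T|; simpl; move=> *; lia.
Qed.

Lemma path_avoid (T : finType) (e : rel T) (x : T) z p : path e z p -> x \notin z :: p ->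
  path (fun a b => [&& a != x, b != x & e a b]) z p.
Proof.
elim: p z => [|w p IH] z //= /andP [Hzw Hp].
rewrite !inE !negb_or => /andP [Hz /andP [Hw Hp']].
rewrite eq_sym Hz eq_sym Hw Hzw /=; apply: IH => //.
by rewrite inE negb_or Hw.
Qed.

Definition ra (T : finType) (F : {set {set T}}) (S : {set T}) :=
  fun a b => [&& a \in S, b \in S & gadj F a b].

Lemma conn_avoid (T : finType) (F : {set {set T}}) (S : {set T}) x z a b :
  (x \notin S \/ z \notin S) -> connect (ra F S) a b -> connect (gadj (F :\ [set x; z])) a b.
Proof.
move=> Hxz; apply: connect_sub => c d /and3P [Hc Hd Hcd]; apply: connect1.
move: Hcd; rewrite /gadj in_setD1 => /andP [-> ->]; rewrite andbT /=.
apply/negP => /eqP E.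
have Hx : x \in [set c; d] by rewrite E !inE eqxx.
have Hz : z \in [set c; d] by rewrite E !inE eqxx orbT.
case: Hxz => /negP; apply.
  by move: Hx; rewrite !inE => /orP [/eqP ->|/eqP ->].
by move: Hz; rewrite !inE => /orP [/eqP ->|/eqP ->].
Qed.

Lemma cap_conn (T : finType) (F : {set {set T}}) A B : is_tree F ->
  induces_connected F A -> induces_connected F B -> induces_connected F (A :&: B).
Proof.
move=> Ht HA HB x y; rewrite !inE => /andP [xA xB] /andP [yA yB].
have /connectP [p0 pth0 E0] := HA x y xA yA.
subst y; clear yA; move: yB; case: (shortenP pth0) => p pth Hu _ yB.
clear pth0; elim: p x pth Hu xA xB yB => [|z p IH] x; first by move=> *; apply: connect0.
rewrite /= => /andP [Hxz Hp] /andP [Hx Hu] xA xB yB.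
have /and3P [_ zA Hg] := Hxz.
case: (boolP (z \in B)) => zB.
  apply: connect_trans (connect1 _) (IH z Hp Hu zA zB yB).
  by rewrite /= !inE xA xB zA zB Hg.
exfalso; move: (cut_edge Ht Hg); apply/negP.
rewrite (sym_connect_sym (@gadj_sym _ _)).
have H1 : connect (gadj (F :\ [set x; z])) z (last z p).
  have pth' := path_avoid Hp Hx.
  have H0 : connect (fun a b => [&& a != x, b != x & ra F A a b]) z (last z p).
    by apply/connectP; exists p.
  apply: connect_sub H0.
  move=> c d /and3P [Hc Hd /and3P [_ _ Hcd]]; apply: connect1.
    move: Hcd; rewrite /gadj in_setD1 => /andP [-> ->]; rewrite andbT /=.
    apply/negP => /eqP E.
    have : x \in [set c; d] by rewrite E !inE eqxx.
    by rewrite !inE eq_sym (negbTE Hc) eq_sym (negbTE Hd).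
have H2 : connect (gadj (F :\ [set x; z])) (last z p) x.
  apply: (@conn_avoid T F B x z); first by right.
  exact: HB.
by rewrite negbK; exact: connect_trans H1 H2.
Qed.

Lemma split_fam (T : finType) (F : {set {set T}}) (P : {set {set T}}) u v : is_tree F -> gadj F u v ->
  (forall B, B \in P -> induces_connected F B) -> family_connected P ->
  u \in \bigcup_(B in P) B -> v \in \bigcup_(B in P) B -> exists2 B, B \in P & (u \in B) && (v \in B).
Proof.
move=> Ht Huv HP Hfam /bigcupP [B1 B1P uB1] /bigcupP [B2 B2P vB2].
case: (boolP [exists B in P, (u \in B) && (v \in B)]) => [/exists_inP [B BP HB]|Hn]; first by exists B.
set G := F :\ [set u; v].
pose side x := connect (gadj G) u x.
have Hconst : forall B, B \in P -> forall x y, x \in B -> y \in B -> side x -> side y.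
  move=> B BP x y xB yB Hx; apply: connect_trans Hx _.
  apply: (@conn_avoid T F B u v).
    have : ~~ ((u \in B) && (v \in B)) by move/exists_inPn: Hn => H; apply: H.
    by rewrite negb_and => /orP [H|H]; [left|right].
  exact: HP.
have key : forall p X, path (fun X Y => [&& X \in P, Y \in P & X :&: Y != set0]) X p ->
    (forall x, x \in X -> side x) -> forall x, x \in last X p -> side x.
  elim=> [|Y p IH] X //= /andP [/and3P [XP YP HXY] Hp] HX; apply: IH Hp _.
  move=> y yY; have /set0Pn [w] := HXY; rewrite inE => /andP [wX wY].
  exact: Hconst Y YP w y wY yY (HX w wX).
have /connectP [p pth E] := Hfam B1 B2 B1P B2P.
have := key p B1 pth; rewrite -E => H.
have : side v.
  apply: H vB2 => x xB1; apply: (Hconst B1 B1P u x uB1 xB1); exact: connect0.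
by move=> Hv; move: (cut_edge Ht Huv); rewrite -/G; move: Hv; rewrite /side => ->.
Qed.

Lemma union_conn (T : finType) (F : {set {set T}}) (P : {set {set T}}) :
  (forall B, B \in P -> induces_connected F B) -> family_connected P ->
  induces_connected F (\bigcup_(B in P) B).
Proof.
move=> HP Hfam x y /bigcupP [B1 B1P xB1] /bigcupP [B2 B2P yB2].
set U := \bigcup_(B in P) B.
have sub : forall B, B \in P -> forall a b, a \in B -> b \in B -> connect (ra F U) a b.
  move=> B BP a b aB bB; apply: connect_sub (HP B BP a b aB bB) => c d /and3P [cB dB cd].
  apply: connect1.
  by rewrite /ra cd andbT; apply/andP; split; apply/bigcupP; exists B.
have key : forall p X, path (fun X Y => [&& X \in P, Y \in P & X :&: Y != set0]) X p ->
    (forall z, z \in X -> connect (ra F U) x z) -> forall z, z \in last X p -> connect (ra F U) x z.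
  elim=> [|Y p IH] X //= /andP [/and3P [XP YP HXY] Hp] HX; apply: IH Hp _.
  move=> y' yY; have /set0Pn [w] := HXY; rewrite inE => /andP [wX wY].
  exact: connect_trans (HX w wX) (sub Y YP w y' wY yY).
have /connectP [p pth E] := Hfam B1 B2 B1P B2P.
have := key p B1 pth; rewrite -E => H.
apply: H yB2 => z zB1; exact: sub B1P x z xB1 zB1.
Qed.

Lemma mem_IH (T : finType) (E : seq {set T}) (V' : {set T}) x : x \in V' -> x \in IH E V'.
Proof.
move=> Hx; rewrite /IH; apply: (big_ind (fun S : {set T} => x \in S)); first by rewrite in_setT.
  by move=> S1 S2 H1 H2; rewrite inE H1 H2.
by move=> e /subsetP; apply.
Qed.

Lemma IH_sub (T : finType) (E : seq {set T}) (V' : {set T}) e : e \in E -> V' \subset e -> IH E V' \subset e.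
Proof. by rewrite /IH => He Hs; rewrite (big_rem e He) /= Hs; apply: subsetIl. Qed.

Lemma IH_obt (T : finType) (E : seq {set T}) (V' : {set T}) : V' != set0 -> IH E V' = setT \/ obtainable E (IH E V').
Proof.
case/set0Pn => x xV.
suff: forall s, {subset s <= E} -> IH s V' = setT \/ obtainable E (IH s V') by apply.
elim=> [|e s IHs] Hs; first by left; rewrite /IH big_nil.
have Hs' : {subset s <= E} by move=> y ys; apply: Hs; rewrite inE ys orbT.
have eE : e \in E by apply: Hs; rewrite inE eqxx.
rewrite /IH big_cons; case: ifP => He; last exact: IHs.
right; rewrite -/(IH s V'); case: (IHs Hs') => [->|Ho]; first by rewrite setIT; apply: obt_edge.
apply: obt_cap => //; first exact: obt_edge.
apply/set0Pn; exists x; rewrite inE (subsetP He x xV) /=; exact: mem_IH.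
Qed.

Lemma obt_prop (T : finType) (E : seq {set T}) F A : is_tree F ->
  (forall e, e \in E -> induces_connected F e) -> obtainable E A ->
  induces_connected F A /\
  (forall u v, gadj F u v -> u \in A -> v \in A -> IH E [set u; v] \subset A).
Proof.
move=> Ht HE; elim => [e eE|A' B _ [cA sA] _ [cB sB] _|P _ _ IHP Hfam].
- split; first exact: HE.
  move=> u v _ uA vA; apply: IH_sub => //; apply/subsetP => z.
  by rewrite !inE => /orP [/eqP->|/eqP->].
- split; first exact: cap_conn.
  move=> u v Huv; rewrite !inE => /andP [uA uB] /andP [vA vB].
  by rewrite subsetI sA // sB.
- split.
    apply: union_conn => // B BP; by case: (IHP B BP).
  move=> u v Huv uU vU.
  have [B BP /andP [uB vB]] := split_fam Ht Huv (fun B BP => (IHP B BP).1) Hfam uU vU.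
  apply: subset_trans ((IHP B BP).2 u v Huv uB vB) _; exact: bigcup_sup.
Qed.

Lemma comp_ic (T : finType) (E : seq {set T}) F B : is_tree F ->
  (forall e, e \in E -> induces_connected F e) -> comp_edge E B -> induces_connected F B.
Proof.
move=> Ht HE [->|[[a ->]|[_ Ho]]].
- move=> x y _ _; have := tree_conn Ht x y.
  apply: connect_sub => c d H; apply: connect1; by rewrite !in_setT.
- move=> x y; rewrite !in_set1 => /eqP -> /eqP ->; exact: connect0.
- exact: (obt_prop Ht HE Ho).1.
Qed.

Lemma comp_sub (T : finType) (E : seq {set T}) F B u v : is_tree F ->
  (forall e, e \in E -> induces_connected F e) -> comp_edge E B ->
  gadj F u v -> u \in B -> v \in B -> IH E [set u; v] \subset B.
Proof.
move=> Ht HE [->|[[a ->]|[_ Ho]]] g.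
- by move=> *; apply: subsetT.
- rewrite !in_set1 => /eqP Hu /eqP Hv; move: (gadj_neq g); by rewrite Hu Hv eqxx.
- exact: (obt_prop Ht HE Ho).2.
Qed.

Lemma sub_IH (T : finType) (E : seq {set T}) (V' : {set T}) : V' \subset IH E V'.
Proof. by apply/subsetP => z; apply: mem_IH. Qed.

Lemma part1 (T : finType) (E : seq {set T}) F u v : is_tree F ->
  (forall e, e \in E -> induces_connected F e) -> gadj F u v -> basic_set E (IH E [set u; v]).
Proof.
move=> Ht HE g; split.
- case: (eqVneq (IH E [set u; v]) setT) => [->|Hne]; first by left.
  have : [set u; v] != set0 by apply/set0Pn; exists u; rewrite !inE eqxx.
  move/(IH_obt E) => [H|H]; first by rewrite H eqxx in Hne.
  by right; right; split => //; rewrite properT.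
- have := subset_leq_card (sub_IH E [set u; v]); rewrite cards2 (gadj_neq g); done.
- move=> [P [Pn HP Hfam HU]].
  have Hic : forall B, B \in P -> induces_connected F B.
    by move=> B BP; apply: (comp_ic Ht HE (HP B BP).1).
  have uU : u \in \bigcup_(B in P) B by rewrite HU; apply: mem_IH; rewrite !inE eqxx.
  have vU : v \in \bigcup_(B in P) B by rewrite HU; apply: mem_IH; rewrite !inE eqxx orbT.
  have [B BP /andP [uB vB]] := split_fam Ht g Hic Hfam uU vU.
  have [Bc Bp] := HP B BP.
  have := comp_sub Ht HE Bc g uB vB.
  by move: Bp; rewrite properE => /andP [_ /negP].
Qed.

Theorem mainTheorem4 (T : finType) (E : seq {set T}) (F : {set {set T}}) :
  hypergraph E -> host_tree E F ->
  (forall u v : T, [set u; v] \in F -> basic_set E (IH E [set u; v])) /\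
  (forall A : {set T}, basic_set E A ->
     exists u v : T, [set u; v] \in F /\ A = IH E [set u; v]).
Proof.
move=> _ [Ht HE]; split.
  move=> u v Hin; apply: (part1 Ht HE).
  have Hne : u != v.
    case: Ht => _ H2 _ _; move: (H2 _ Hin); rewrite cards2; by case: (u != v).
  by rewrite /gadj Hne Hin.
move=> A [Ac Acard Hnd].
have Hic := comp_ic Ht HE Ac.
have nb : forall z, z \in A -> exists2 w, w \in A & gadj F z w.
  move=> z zA.
  have gen : forall w', w' \in A -> w' != z -> exists2 w, w \in A & gadj F z w.
    move=> w' w'A Hne; have /connectP [p pth Ew] := Hic z w' zA w'A.
    case: p pth Ew => [|w p] /=; first by move=> _ Ew; rewrite Ew eqxx in Hne.
    by move=> /andP [/and3P [_ wA gw] _] _; exists w.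
  have [a [b [aA bA ab]]] := card_gt1P Acard.
  case: (eqVneq a z) => [Eaz|Naz]; last exact: gen Naz.
  by apply: (gen b bA); rewrite -Eaz eq_sym.
pose S := [set p : T * T | [&& p.1 \in A, p.2 \in A & gadj F p.1 p.2]].
pose f (p : T * T) := IH E [set p.1; p.2].
pose P := f @: S.
case: (boolP [exists p in S, f p == A]) => [/exists_inP [[a b] pS /eqP fA]|Hn].
  exists a, b; rewrite inE /= in pS; case/and3P: pS => _ _ /andP [_ Hin]; split => //.
have Hmem : forall a b, a \in A -> b \in A -> gadj F a b -> f (a, b) \in P.
  by move=> a b aA bA g; apply/imsetP; exists (a, b) => //; rewrite inE /= aA bA g.
have Hab : forall a b, a \in f (a, b) by move=> a b; apply: mem_IH; rewrite !inE eqxx.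
have Hab' : forall a b, b \in f (a, b) by move=> a b; apply: mem_IH; rewrite !inE eqxx orbT.
exfalso; apply: Hnd; exists P; split.
- have : 0 < #|A| by apply: ltn_trans Acard.
  case/card_gt0P => z zA; have [w wA g] := nb z zA.
  by apply/set0Pn; exists (f (z, w)); apply: Hmem.
- move=> B /imsetP [[a b] pS ->]; move: (pS); rewrite inE /= => /and3P [aA bA g].
  split; first by case: (part1 Ht HE g).
  rewrite properEneq; apply/andP; split.
    by move/exists_inPn: Hn => H; apply: H.
  exact: comp_sub Ht HE Ac g aA bA.
- move=> B C /imsetP [[a b] pS ->] /imsetP [[c d] qS ->].
  move: pS qS; rewrite !inE /= => /and3P [aA bA gab] /and3P [cA dA gcd].
  set rel := (fun X Y => [&& X \in P, Y \in P & X :&: Y != set0]).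
  have /connectP [p pth Ec] := Hic a c aA cA.
  have key : forall p x, path (ra F A) x p -> x \in A ->
      (forall w, w \in A -> gadj F x w -> connect rel (f (a, b)) (f (x, w))) ->
      forall w, w \in A -> gadj F (last x p) w -> connect rel (f (a, b)) (f (last x p, w)).
    elim=> [|z q IH] x //= /andP [/and3P [_ zA gxz] Hq] xA Hx.
    apply: (IH z Hq zA) => w wA gzw.
    apply: connect_trans (Hx z zA gxz) (connect1 _).
    rewrite /rel (Hmem x z) // (Hmem z w) //=.
    by apply/set0Pn; exists z; rewrite inE Hab Hab'.
  have Ha : forall w, w \in A -> gadj F a w -> connect rel (f (a, b)) (f (a, w)).
    move=> w wA gaw; apply: connect1.
    rewrite /rel (Hmem a b) // (Hmem a w) //=.
    by apply/set0Pn; exists a; rewrite inE !Hab.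
  by move: (key p a pth aA Ha d dA); rewrite -Ec; apply.
- apply/eqP; rewrite eqEsubset; apply/andP; split.
    apply/subsetP => z /bigcupP [B /imsetP [[a b] pS ->] zB].
    move: pS; rewrite inE /= => /and3P [aA bA g].
    exact: (subsetP (comp_sub Ht HE Ac g aA bA)).
  apply/subsetP => z zA; have [w wA g] := nb z zA; apply/bigcupP.
  by exists (f (z, w)); [apply: Hmem | apply: Hab].
Qed.
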